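(* Let $a$ be the unique positive root of $\frac{1-\ln a}{a}=\frac1e$ and $\psi_a(x)=1-(1-x)a^x$. Then for all $0<y\le1$, \[ \frac1y\,\psi_a\Big(\frac{y\,e^{1-y}}{2\,(1-y)^{1-y}}\Big)\le1. \]
   Context: Convention: $0^0=1$. *)

(* Defs.v *)
From Stdlib Require Import Reals.
Open Scope R_scope.

(* Real power x^y for x >= 0, with the convention 0^0 = 1 (and 0^y = 0 for y <> 0). *)
Definition rpow (x y : R) : R :=
  if Req_EM_T x 0 then (if Req_EM_T y 0 then 1 else 0) else Rpower x y.

Definition psi (a x : R) : R := 1 - (1 - x) * rpow a x.

(* Main.v *)
Require Import Defs.
From Stdlib Require Import Reals Lra Psatz.
Open Scope R_scope.

Lemma exp_le x y : x <= y -> exp x <= exp y.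
Proof. intros h. destruct (Rle_lt_or_eq_dec _ _ h) as [h'|h'].
  - left; apply exp_increasing; exact h'.
  - subst; lra. Qed.

Lemma exp_base x B : x < 1 -> 1 <= B*(1-x) -> exp x <= B.
Proof. intros h1 h2. assert (h3 := exp_ineq1_le (-x)). rewrite exp_Ropp in h3.
  assert (h4 := exp_pos x).
  assert (exp x * (1 - x) <= 1).
  { replace 1 with (exp x * / exp x) at 2 by (field; lra). apply Rmult_le_compat_l; lra. }
  assert (exp x * (1-x) <= B * (1-x)) by lra.
  apply Rmult_le_reg_r with (1-x); lra. Qed.

Lemma exp_step x B C : exp (x/2) <= B -> B*B <= C -> exp x <= C.
Proof. intros h1 h2. replace x with (x/2 + x/2) by field. rewrite exp_plus.
  assert (h := exp_pos (x/2)). nra. Qed.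

Lemma ln_le_sub1 w : 0 < w -> ln w <= w - 1.
Proof. intros h. assert (h1 := exp_ineq1_le (ln w)). rewrite exp_ln in h1; lra. Qed.

Lemma ubound s s1 : 0 < s <= s1 -> s1 <= 1 -> s - s*ln s <= s1 - s1*ln s1.
Proof. intros hs hs1.
  assert (h := ln_le_sub1 (s1/s) ltac:(apply Rdiv_lt_0_compat; lra)).
  assert (hd : ln s1 = ln (s1/s) + ln s).
  { rewrite <- ln_mult by (try apply Rdiv_lt_0_compat; lra). f_equal; field; lra. }
  assert (h2 : s*(ln s1 - ln s) <= s1 - s).
  { replace (s1 - s) with (s*(s1/s - 1)) by (field; lra). apply Rmult_le_compat_l; lra. }
  assert (h3 : ln s1 <= 0).
  { assert (h4 := ln_le_sub1 s1 ltac:(lra)). lra. }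
  nra. Qed.

Lemma mono x X : 0 <= x <= X -> X <= 1 -> (1-X)*(1+X*(43/100)/2)^2 <= (1-x)*(1+x*(43/100)/2)^2.
Proof. intros. assert (0 <= (X-x)*(x+X)) by nra. assert (0 <= (X-x)*(x*x+x*X+X*X)) by (apply Rmult_le_pos; nra). nra. Qed.

Lemma interval_case (y1 y2 c q L y : R) :
  0 < 1 - y1 <= 1 -> exp q <= 1 - y1 -> exp ((1-y1) - (1-y1)*q) <= 2*c ->
  (forall z, y1 <= z <= y2 -> 1 - z <= (1-c*z)*(1+c*z*(43/100)/2)^2) ->
  c*y2 <= 1 -> 0 < c ->
  43/100 <= L <= 1 -> y1 <= y <= y2 -> 0 < y < 1 ->
  1 - (1 - y*exp((1-y) - (1-y)*ln(1-y))/2)*exp(y*exp((1-y) - (1-y)*ln(1-y))/2*L) <= y.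
Proof.
  intros h1 h2 h3 h4 h5 h6 hL hy hy'.
  assert (hq : q <= ln (1-y1)).
  { destruct (Rle_or_lt q (ln (1-y1))) as [h|h]; [exact h|].
    apply exp_increasing in h. rewrite exp_ln in h by lra. lra. }
  assert (hu : (1-y) - (1-y)*ln(1-y) <= (1-y1) - (1-y1)*q).
  { apply Rle_trans with ((1-y1) - (1-y1)*ln(1-y1)). apply ubound; lra.
    assert (0 <= (1-y1)*(ln(1-y1) - q)) by (apply Rmult_le_pos; lra). lra. }
  assert (hE : exp ((1-y) - (1-y)*ln(1-y)) <= 2*c).
  { eapply Rle_trans. apply exp_le, hu. exact h3. }
  set (E := exp ((1-y) - (1-y)*ln(1-y))) in *.
  assert (hEp : 0 < E) by apply exp_pos.
  set (X := y*E/2).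
  assert (hX0 : 0 <= X) by (unfold X; nra).
  assert (hX1 : X <= c*y) by (unfold X; nra).
  assert (hX2 : c*y <= 1) by nra.
  assert (hexp : (1 + X*L/2)^2 <= exp (X*L)).
  { replace (X*L) with (X*L/2 + X*L/2) at 2 by field. rewrite exp_plus.
    assert (h := exp_ineq1_le (X*L/2)). assert (0 <= 1 + X*L/2) by nra. nra. }
  assert (hL2 : (1 + X*(43/100)/2)^2 <= (1 + X*L/2)^2).
  { assert (0 <= X*(43/100)) by nra. assert (X*(43/100) <= X*L) by nra. nra. }
  assert (hm := mono X (c*y) ltac:(lra) hX2).
  assert (hp := h4 y ltac:(lra)).
  assert (0 <= 1 - X) by lra.
  assert ((1-X)*(1 + X*(43/100)/2)^2 <= (1-X)*exp (X*L)).
  { apply Rmult_le_compat_l; lra. }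
  lra.
Qed.
Lemma iv0 (L y : R) : 43/100 <= L <= 1 -> (0) <= y <= (29/100) -> 0 < y < 1 ->
  1 - (1 - y*exp((1-y) - (1-y)*ln(1-y))/2)*exp(y*exp((1-y) - (1-y)*ln(1-y))/2*L) <= y.
Proof.
  intros hL hy hy'.
  apply (interval_case (0) (29/100) (681/500) (0)); try lra.
  - rewrite exp_0; lra.
  - (eapply Rle_trans with (r2 := (271862643/100000000)); [|lra]);
  apply (exp_step _ (1648825773/1000000000)); [|lra];
  apply (exp_step _ (1284066109/1000000000)); [|lra];
  apply (exp_step _ (141645801/125000000)); [|lra];
  apply (exp_step _ (266125723/250000000)); [|lra];
  apply (exp_step _ (515873747/500000000)); [|lra];
  apply (exp_step _ (25393743/25000000)); [|lra];
  apply (exp_step _ (201568819/200000000)); [|lra];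
  apply (exp_step _ (501957193/500000000)); [|lra];
  apply (exp_step _ (1001955281/1000000000)); [|lra];
  apply (exp_step _ (1000977163/1000000000)); [|lra];
  apply (exp_step _ (500244231/500000000)); [|lra];
  apply (exp_step _ (1000244201/1000000000)); [|lra];
  apply exp_base; lra.
  - intros z hz. nra.
Qed.

Lemma iv1 (L y : R) : 43/100 <= L <= 1 -> (29/100) <= y <= (37/100) -> 0 < y < 1 ->
  1 - (1 - y*exp((1-y) - (1-y)*ln(1-y))/2)*exp(y*exp((1-y) - (1-y)*ln(1-y))/2*L) <= y.
Proof.
  intros hL hy hy'.
  apply (interval_case (29/100) (37/100) (13/10) (-43/125)); try lra.
  - (eapply Rle_trans with (r2 := (70894243/100000000)); [|lra]);
  apply (exp_step _ (841987191/1000000000)); [|lra];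
  apply (exp_step _ (4587993/5000000)); [|lra];
  apply (exp_step _ (95791367/100000000)); [|lra];
  apply (exp_step _ (489365321/500000000)); [|lra];
  apply (exp_step _ (989308163/1000000000)); [|lra];
  apply (exp_step _ (198927943/200000000)); [|lra];
  apply (exp_step _ (31166133/31250000)); [|lra];
  apply (exp_step _ (499328613/500000000)); [|lra];
  apply (exp_step _ (999328387/1000000000)); [|lra];
  apply (exp_step _ (999664137/1000000000)); [|lra];
  apply (exp_step _ (499916027/500000000)); [|lra];
  apply (exp_step _ (999916023/1000000000)); [|lra];
  apply exp_base; lra.
  - (eapply Rle_trans with (r2 := (1298501087/500000000)); [|lra]);
  apply (exp_step _ (322304339/200000000)); [|lra];
  apply (exp_step _ (317364311/250000000)); [|lra];
  apply (exp_step _ (281675483/250000000)); [|lra];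
  apply (exp_step _ (1061462167/1000000000)); [|lra];
  apply (exp_step _ (51513643/50000000)); [|lra];
  apply (exp_step _ (126877947/125000000)); [|lra];
  apply (exp_step _ (125935473/125000000)); [|lra];
  apply (exp_step _ (1003734917/1000000000)); [|lra];
  apply (exp_step _ (500932859/500000000)); [|lra];
  apply (exp_step _ (125116553/125000000)); [|lra];
  apply (exp_step _ (1000466103/1000000000)); [|lra];
  apply (exp_step _ (15628641/15625000)); [|lra];
  apply exp_base; lra.
  - intros z hz. nra.
Qed.

Lemma iv2 (L y : R) : 43/100 <= L <= 1 -> (37/100) <= y <= (43/100) -> 0 < y < 1 ->
  1 - (1 - y*exp((1-y) - (1-y)*ln(1-y))/2)*exp(y*exp((1-y) - (1-y)*ln(1-y))/2*L) <= y.
Proof.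
  intros hL hy hy'.
  apply (interval_case (37/100) (43/100) (63/50) (-58/125)); try lra.
  - (eapply Rle_trans with (r2 := (628782227/1000000000)); [|lra]);
  apply (exp_step _ (792957897/1000000000)); [|lra];
  apply (exp_step _ (445240917/500000000)); [|lra];
  apply (exp_step _ (18873069/20000000)); [|lra];
  apply (exp_step _ (971418267/1000000000)); [|lra];
  apply (exp_step _ (985605533/1000000000)); [|lra];
  apply (exp_step _ (496388339/500000000)); [|lra];
  apply (exp_step _ (996381793/1000000000)); [|lra];
  apply (exp_step _ (998189257/1000000000)); [|lra];
  apply (exp_step _ (499547109/500000000)); [|lra];
  apply (exp_step _ (499773503/500000000)); [|lra];
  apply (exp_step _ (999773477/1000000000)); [|lra];
  apply (exp_step _ (249971683/250000000)); [|lra];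
  apply exp_base; lra.
  - (eapply Rle_trans with (r2 := (1257694113/500000000)); [|lra]);
  apply (exp_step _ (1585997549/1000000000)); [|lra];
  apply (exp_step _ (629681973/500000000)); [|lra];
  apply (exp_step _ (1122213859/1000000000)); [|lra];
  apply (exp_step _ (529672979/500000000)); [|lra];
  apply (exp_step _ (514622667/500000000)); [|lra];
  apply (exp_step _ (1014517291/1000000000)); [|lra];
  apply (exp_step _ (1007232491/1000000000)); [|lra];
  apply (exp_step _ (100360973/100000000)); [|lra];
  apply (exp_step _ (1001803239/1000000000)); [|lra];
  apply (exp_step _ (1000901213/1000000000)); [|lra];
  apply (exp_step _ (200090101/200000000)); [|lra];
  apply (exp_step _ (1000225227/1000000000)); [|lra];
  apply exp_base; lra.
  - intros z hz. nra.
Qed.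

Lemma iv3 (L y : R) : 43/100 <= L <= 1 -> (43/100) <= y <= (47/100) -> 0 < y < 1 ->
  1 - (1 - y*exp((1-y) - (1-y)*ln(1-y))/2)*exp(y*exp((1-y) - (1-y)*ln(1-y))/2*L) <= y.
Proof.
  intros hL hy hy'.
  apply (interval_case (43/100) (47/100) (123/100) (-141/250)); try lra.
  - (eapply Rle_trans with (r2 := (35559513/62500000)); [|lra]);
  apply (exp_step _ (754289207/1000000000)); [|lra];
  apply (exp_step _ (108562281/125000000)); [|lra];
  apply (exp_step _ (465966267/500000000)); [|lra];
  apply (exp_step _ (3770963/3906250)); [|lra];
  apply (exp_step _ (39301227/40000000)); [|lra];
  apply (exp_step _ (991226853/1000000000)); [|lra];
  apply (exp_step _ (995603763/1000000000)); [|lra];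
  apply (exp_step _ (49889973/50000000)); [|lra];
  apply (exp_step _ (249724781/250000000)); [|lra];
  apply (exp_step _ (99944941/100000000)); [|lra];
  apply (exp_step _ (999724667/1000000000)); [|lra];
  apply (exp_step _ (249965581/250000000)); [|lra];
  apply exp_base; lra.
  - (eapply Rle_trans with (r2 := (2438979157/1000000000)); [|lra]);
  apply (exp_step _ (1561723137/1000000000)); [|lra];
  apply (exp_step _ (9763197/7812500)); [|lra];
  apply (exp_step _ (1117894993/1000000000)); [|lra];
  apply (exp_step _ (528652767/500000000)); [|lra];
  apply (exp_step _ (1028253633/1000000000)); [|lra];
  apply (exp_step _ (507014209/500000000)); [|lra];
  apply (exp_step _ (50349489/50000000)); [|lra];
  apply (exp_step _ (250872201/250000000)); [|lra];
  apply (exp_step _ (1001742883/1000000000)); [|lra];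
  apply (exp_step _ (500435531/500000000)); [|lra];
  apply (exp_step _ (250108859/250000000)); [|lra];
  apply (exp_step _ (500108847/500000000)); [|lra];
  apply exp_base; lra.
  - intros z hz. nra.
Qed.

Lemma iv4 (L y : R) : 43/100 <= L <= 1 -> (47/100) <= y <= (13/25) -> 0 < y < 1 ->
  1 - (1 - y*exp((1-y) - (1-y)*ln(1-y))/2)*exp(y*exp((1-y) - (1-y)*ln(1-y))/2*L) <= y.
Proof.
  intros hL hy hy'.
  apply (interval_case (47/100) (13/25) (6/5) (-159/250)); try lra.
  - (eapply Rle_trans with (r2 := (105886841/200000000)); [|lra]);
  apply (exp_step _ (145524459/200000000)); [|lra];
  apply (exp_step _ (853007793/1000000000)); [|lra];
  apply (exp_step _ (92358421/100000000)); [|lra];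
  apply (exp_step _ (961032887/1000000000)); [|lra];
  apply (exp_step _ (30635089/31250000)); [|lra];
  apply (exp_step _ (990112543/1000000000)); [|lra];
  apply (exp_step _ (99504399/100000000)); [|lra];
  apply (exp_step _ (997518917/1000000000)); [|lra];
  apply (exp_step _ (31211209/31250000)); [|lra];
  apply (exp_step _ (999379151/1000000000)); [|lra];
  apply (exp_step _ (999689527/1000000000)); [|lra];
  apply (exp_step _ (999844751/1000000000)); [|lra];
  apply exp_base; lra.
  - (eapply Rle_trans with (r2 := (2380180037/1000000000)); [|lra]);
  apply (exp_step _ (1542783211/1000000000)); [|lra];
  apply (exp_step _ (621044123/500000000)); [|lra];
  apply (exp_step _ (69655633/62500000)); [|lra];
  apply (exp_step _ (211138829/200000000)); [|lra];
  apply (exp_step _ (513734889/500000000)); [|lra];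
  apply (exp_step _ (1013641839/1000000000)); [|lra];
  apply (exp_step _ (503398907/500000000)); [|lra];
  apply (exp_step _ (20067863/20000000)); [|lra];
  apply (exp_step _ (500847569/500000000)); [|lra];
  apply (exp_step _ (100084721/100000000)); [|lra];
  apply (exp_step _ (200084703/200000000)); [|lra];
  apply (exp_step _ (200042347/200000000)); [|lra];
  apply exp_base; lra.
  - intros z hz. nra.
Qed.

Lemma iv5 (L y : R) : 43/100 <= L <= 1 -> (13/25) <= y <= (3/5) -> 0 < y < 1 ->
  1 - (1 - y*exp((1-y) - (1-y)*ln(1-y))/2)*exp(y*exp((1-y) - (1-y)*ln(1-y))/2*L) <= y.
Proof.
  intros hL hy hy'.
  apply (interval_case (13/25) (3/5) (29/25) (-147/200)); try lra.
  - (eapply Rle_trans with (r2 := (239769271/500000000)); [|lra]);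
  apply (exp_step _ (346243607/500000000)); [|lra];
  apply (exp_step _ (416079083/500000000)); [|lra];
  apply (exp_step _ (228056759/250000000)); [|lra];
  apply (exp_step _ (238776443/250000000)); [|lra];
  apply (exp_step _ (97729513/100000000)); [|lra];
  apply (exp_step _ (61786399/62500000)); [|lra];
  apply (exp_step _ (994274803/1000000000)); [|lra];
  apply (exp_step _ (249283323/250000000)); [|lra];
  apply (exp_step _ (998565617/1000000000)); [|lra];
  apply (exp_step _ (999282551/1000000000)); [|lra];
  apply (exp_step _ (999641211/1000000000)); [|lra];
  apply (exp_step _ (999820589/1000000000)); [|lra];
  apply exp_base; lra.
  - (eapply Rle_trans with (r2 := (2299952809/1000000000)); [|lra]);
  apply (exp_step _ (151655953/100000000)); [|lra];
  apply (exp_step _ (246297343/200000000)); [|lra];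
  apply (exp_step _ (1109723711/1000000000)); [|lra];
  apply (exp_step _ (526717123/500000000)); [|lra];
  apply (exp_step _ (1026369449/1000000000)); [|lra];
  apply (exp_step _ (1013098933/1000000000)); [|lra];
  apply (exp_step _ (503264079/500000000)); [|lra];
  apply (exp_step _ (1003258769/1000000000)); [|lra];
  apply (exp_step _ (1001628059/1000000000)); [|lra];
  apply (exp_step _ (500406849/500000000)); [|lra];
  apply (exp_step _ (500203383/500000000)); [|lra];
  apply (exp_step _ (500101681/500000000)); [|lra];
  apply exp_base; lra.
  - intros z hz. nra.
Qed.

Lemma iv6 (L y : R) : 43/100 <= L <= 1 -> (3/5) <= y <= (77/100) -> 0 < y < 1 ->
  1 - (1 - y*exp((1-y) - (1-y)*ln(1-y))/2)*exp(y*exp((1-y) - (1-y)*ln(1-y))/2*L) <= y.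
Proof.
  intros hL hy hy'.
  apply (interval_case (3/5) (77/100) (27/25) (-459/500)); try lra.
  - (eapply Rle_trans with (r2 := (399360277/1000000000)); [|lra]);
  apply (exp_step _ (39496849/62500000)); [|lra];
  apply (exp_step _ (794952567/1000000000)); [|lra];
  apply (exp_step _ (7132809/8000000)); [|lra];
  apply (exp_step _ (472123163/500000000)); [|lra];
  apply (exp_step _ (971723379/1000000000)); [|lra];
  apply (exp_step _ (197152061/200000000)); [|lra];
  apply (exp_step _ (31026707/31250000)); [|lra];
  apply (exp_step _ (996420907/1000000000)); [|lra];
  apply (exp_step _ (998208849/1000000000)); [|lra];
  apply (exp_step _ (999104023/1000000000)); [|lra];
  apply (exp_step _ (999551911/1000000000)); [|lra];
  apply (exp_step _ (99977593/100000000)); [|lra];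
  apply exp_base; lra.
  - (eapply Rle_trans with (r2 := (2153890173/1000000000)); [|lra]);
  apply (exp_step _ (183451721/125000000)); [|lra];
  apply (exp_step _ (12114511/10000000)); [|lra];
  apply (exp_step _ (1100659393/1000000000)); [|lra];
  apply (exp_step _ (524561577/500000000)); [|lra];
  apply (exp_step _ (102426713/100000000)); [|lra];
  apply (exp_step _ (1012060833/1000000000)); [|lra];
  apply (exp_step _ (503006171/500000000)); [|lra];
  apply (exp_step _ (501500833/500000000)); [|lra];
  apply (exp_step _ (250374927/250000000)); [|lra];
  apply (exp_step _ (1000749573/1000000000)); [|lra];
  apply (exp_step _ (250093679/250000000)); [|lra];
  apply (exp_step _ (50009367/50000000)); [|lra];
  apply exp_base; lra.
  - intros z hz. nra.
Qed.

Lemma iv7 (L y : R) : 43/100 <= L <= 1 -> (77/100) <= y <= (1) -> 0 < y < 1 ->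
  1 - (1 - y*exp((1-y) - (1-y)*ln(1-y))/2)*exp(y*exp((1-y) - (1-y)*ln(1-y))/2*L) <= y.
Proof.
  intros hL hy hy'.
  apply (interval_case (77/100) (1) (89/100) (-1471/1000)); try lra.
  - (eapply Rle_trans with (r2 := (14359843/62500000)); [|lra]);
  apply (exp_step _ (479330249/1000000000)); [|lra];
  apply (exp_step _ (692336803/1000000000)); [|lra];
  apply (exp_step _ (832067787/1000000000)); [|lra];
  apply (exp_step _ (912177497/1000000000)); [|lra];
  apply (exp_step _ (477539919/500000000)); [|lra];
  apply (exp_step _ (488640931/500000000)); [|lra];
  apply (exp_step _ (988575673/1000000000)); [|lra];
  apply (exp_step _ (248567857/250000000)); [|lra];
  apply (exp_step _ (2492829/2500000)); [|lra];
  apply (exp_step _ (99856477/100000000)); [|lra];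
  apply (exp_step _ (999282127/1000000000)); [|lra];
  apply (exp_step _ (999640999/1000000000)); [|lra];
  apply exp_base; lra.
  - (eapply Rle_trans with (r2 := (1765393859/1000000000)); [|lra]);
  apply (exp_step _ (41521289/31250000)); [|lra];
  apply (exp_step _ (576342183/500000000)); [|lra];
  apply (exp_step _ (33550981/31250000)); [|lra];
  apply (exp_step _ (16190029/15625000)); [|lra];
  apply (exp_step _ (508960179/500000000)); [|lra];
  apply (exp_step _ (126115049/125000000)); [|lra];
  apply (exp_step _ (1004450293/1000000000)); [|lra];
  apply (exp_step _ (250555669/250000000)); [|lra];
  apply (exp_step _ (1001110721/1000000000)); [|lra];
  apply (exp_step _ (500277603/500000000)); [|lra];
  apply (exp_step _ (250069391/250000000)); [|lra];
  apply (exp_step _ (250034693/250000000)); [|lra];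
  apply exp_base; lra.
  - intros z hz. nra.
Qed.

Lemma Lbound : exp (-57/100) <= 566/1000.
Proof.
  (eapply Rle_trans with (r2 := (282775491/500000000)); [|lra]);
  apply (exp_step _ (752031237/1000000000)); [|lra];
  apply (exp_step _ (433598673/500000000)); [|lra];
  apply (exp_step _ (931234313/1000000000)); [|lra];
  apply (exp_step _ (38600193/40000000)); [|lra];
  apply (exp_step _ (982346591/1000000000)); [|lra];
  apply (exp_step _ (123891749/125000000)); [|lra];
  apply (exp_step _ (497778563/500000000)); [|lra];
  apply (exp_step _ (99777609/100000000)); [|lra];
  apply (exp_step _ (499443713/500000000)); [|lra];
  apply (exp_step _ (499721779/500000000)); [|lra];
  apply (exp_step _ (49986087/50000000)); [|lra];
  apply (exp_step _ (49993043/50000000)); [|lra];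
  apply exp_base; lra.
Qed.

Lemma rpow_pos a x : 0 < a -> rpow a x = exp (x * ln a).
Proof. intros h. unfold rpow. destruct (Req_EM_T a 0); [lra|]. reflexivity. Qed.

Lemma all_iv (L y : R) : 43/100 <= L <= 1 -> 0 < y < 1 ->
  1 - (1 - y*exp((1-y) - (1-y)*ln(1-y))/2)*exp(y*exp((1-y) - (1-y)*ln(1-y))/2*L) <= y.
Proof.
  intros hL hy.
  destruct (Rle_or_lt y (29/100)). apply iv0; lra.
  destruct (Rle_or_lt y (37/100)). apply iv1; lra.
  destruct (Rle_or_lt y (43/100)). apply iv2; lra.
  destruct (Rle_or_lt y (47/100)). apply iv3; lra.
  destruct (Rle_or_lt y (52/100)). apply iv4; lra.
  destruct (Rle_or_lt y (6/10)). apply iv5; lra.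
  destruct (Rle_or_lt y (77/100)). apply iv6; lra.
  apply iv7; lra.
Qed.

Theorem lemma5p8 (a : R) (ha : 0 < a) (hroot : (1 - ln a) / a = 1 / exp 1)
  (huniq : forall b : R, 0 < b -> (1 - ln b) / b = 1 / exp 1 -> b = a) :
  forall y : R, 0 < y <= 1 ->
    (1 / y) * psi a (y * exp (1 - y) / (2 * rpow (1 - y) (1 - y))) <= 1.
Proof.
  intros y [hy0 hy1].
  assert (he1 := exp_pos 1).
  assert (hEa : exp (ln a) = a) by (apply exp_ln; lra).
  set (L := ln a) in *.
  assert (hL : 1 - L = exp (L - 1)).
  { unfold Rminus at 2. rewrite exp_plus, exp_Ropp, hEa.
    apply (f_equal (fun t => t * a)) in hroot.
    replace ((1 - L) / a * a) with (1 - L) in hroot by (field; lra).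
    rewrite hroot. field; lra. }
  assert (hL0 : 43/100 <= L).
  { destruct (Rle_or_lt (43/100) L) as [h|h]; [exact h|].
    assert (h2 : exp (L - 1) < exp (-57/100)) by (apply exp_increasing; lra).
    assert (h3 := Lbound). lra. }
  assert (hL1 : L <= 1) by (assert (h := exp_pos (L-1)); lra).
  unfold psi. rewrite (rpow_pos a) by lra. fold L.
  destruct (Req_dec y 1) as [hy|hy].
  - subst y. unfold rpow. replace (1-1) with 0 by ring.
    destruct (Req_EM_T 0 0) as [_|n]; [|congruence].
    rewrite exp_0. assert (h := exp_pos (1 * exp 0 / (2 * 1) * L)).
    rewrite exp_0 in h. replace (1 * 1 / (2*1)) with (1/2) in * by field.
    replace (1/1) with 1 by field. nra.
  - assert (hs : 0 < 1 - y) by lra.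
    rewrite rpow_pos by lra.
    assert (hx : y * exp (1 - y) / (2 * exp ((1 - y) * ln (1 - y)))
               = y*exp((1-y) - (1-y)*ln(1-y))/2).
    { replace (exp ((1-y) - (1-y)*ln(1-y))) with (exp (1-y) * exp (- ((1-y)*ln(1-y))))
        by (rewrite <- exp_plus; f_equal; ring).
      rewrite exp_Ropp. field.
      apply Rgt_not_eq, exp_pos. }
    rewrite hx.
    assert (h := all_iv L y ltac:(lra) ltac:(lra)).
    apply Rle_trans with (1/y * y).
    + apply Rmult_le_compat_l. apply Rlt_le, Rdiv_lt_0_compat; lra. exact h.
    + right; field; lra.
Qed.
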